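(* Let $M$ be a finitely generated $A_n(K)$-module. Let $\{g_1,\dots,g_p\}$ and $\{h_1,\dots,h_q\}$ be two finite systems of generators of $M$, with associated characteristic polynomials $$\phi_M(t_1,t_2)=\sum_{i=0}^n\sum_{j=0}^n a_{ij}\binom{t_1+i}{i}\binom{t_2+j}{j},\qquad \phi^*_M(t_1,t_2)=\sum_{i=0}^n\sum_{j=0}^n b_{ij}\binom{t_1+i}{i}\binom{t_2+j}{j}$$ ($a_{ij},b_{ij}\in\mathbf Z$). Let $\Lambda=\{(i,j):0\le i,j\le n,\ a_{ij}\neq0\}$ and $\Lambda'=\{(i,j):0\le i,j\le n,\ b_{ij}\ne0\}$; let $\mu=(\mu_1,\mu_2)$, $\nu=(\nu_1,\nu_2)$ be the maximal elements of $\Lambda$ with respect to the lexicographic and reverse lexicographic orders on $\mathbf N^2$ respectively, and $\sigma,\epsilon$ the corresponding maximal elements of $\Lambda'$. Then $\deg\phi_M=\deg\phi^*_M$ (call it $d$), $a_{nn}=b_{nn}$, $\mu=\sigma$, $\nu=\epsilon$, $a_{\mu_1\mu_2}=b_{\sigma_1\sigma_2}$, $a_{\nu_1\nu_2}=b_{\epsilon_1\epsilon_2}$, and for every monomial $t_1^it_2^j$ with $i+j=d$ its coefficient in $\phi_M$ equals its coefficient in $\phi^*_M$. In other words, these quantities do not depend on the finite system of generators the characteristic polynomial is associated with.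
   Context: $K$ is a field of characteristic zero and $A_n(K)$ is the Weyl algebra generated over $K$ by $x_1,\dots,x_n,\partial_1,\dots,\partial_n$, all pairs commuting except $\partial_ix_i=x_i\partial_i+1$; the monomials $x^\alpha\partial^\beta$ ($\alpha,\beta\in\mathbf N^n$) form a $K$-basis. For $r,s\in\mathbf N$, $W_{rs}$ is the $K$-span of the monomials $x^\alpha\partial^\beta$ with $|\alpha|\le r$, $|\beta|\le s$ ($W_{rs}=0$ if $r<0$ or $s<0$). For a finite generating system $f_1,\dots,f_k$ of $M$, the characteristic polynomial associated with it is the polynomial $\phi(t_1,t_2)\in\mathbf Q[t_1,t_2]$ with $\phi(r,s)=\dim_K\sum_{i=1}^kW_{rs}f_i$ for all sufficiently large integers $r,s$; it exists, has degree at most $n$ in each variable, and can be uniquely written in the displayed form with integer coefficients. $\binom tk=t(t-1)\cdots(t-k+1)/k!$, $\binom t0=1$. The lexicographic order on $\mathbf N^2$ compares first coordinates first; the reverse lexicographic order compares second coordinates first. *)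

(* Defs.v *)
From HB Require Import structures.
From mathcomp Require Import all_boot all_order all_algebra.
From mathcomp Require Import mpoly.
Set Implicit Arguments. Unset Strict Implicit. Unset Printing Implicit Defensive.
Import Order.TTheory GRing.Theory Num.Theory.
Local Open Scope ring_scope.

(* An A_n(K)-module is a K-vector space M together with K-linear operators
   X i (action of x_i) and D i (action of d_i) satisfying the defining
   relations of the Weyl algebra A_n(K). *)
Definition weyl_rel (K : fieldType) (n : nat) (M : lmodType K)
  (X D : 'I_n -> {linear M -> M}) : Prop :=
  [/\ forall i j v, X i (X j v) = X j (X i v),
      forall i j v, D i (D j v) = D j (D i v)
    & forall i j v, D i (X j v) = X j (D i v) + (i == j)%:R *: v].

(* x^alpha acting on v (the x_i commute, so the order is irrelevant) *)
Definition mono_act (K : fieldType) (n : nat) (M : lmodType K)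
  (Y : 'I_n -> {linear M -> M}) (a : 'I_n -> nat) (v : M) : M :=
  foldr (fun i w => iter (a i) (Y i) w) v (enum 'I_n).

Definition multi_le (n r : nat) : seq ('I_n -> nat) :=
  [seq (fun i => nat_of_ord (a i)) |
     a : {ffun 'I_n -> 'I_r.+1} <- enum {ffun 'I_n -> 'I_r.+1} & (\sum_i nat_of_ord (a i) <= r)%N].

(* The vectors x^alpha d^beta g (|alpha| <= r, |beta| <= s, g in gs);
   they span  sum_{g in gs} W_{rs} g. *)
Definition Wgens (K : fieldType) (n : nat) (M : lmodType K)
  (X D : 'I_n -> {linear M -> M}) (r s : nat) (gs : seq M) : seq M :=
  [seq mono_act X ab.1 (mono_act D ab.2 g) |
     g <- gs, ab <- [seq (a, b) | a <- multi_le n r, b <- multi_le n s]].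

Definition in_span (K : fieldType) (M : lmodType K) (x : M) (s : seq M) : Prop :=
  exists c : 'I_(size s) -> K, x = \sum_(i < size s) c i *: s`_i.

Definition lin_free (K : fieldType) (M : lmodType K) (s : seq M) : Prop :=
  forall c : 'I_(size s) -> K,
    \sum_(i < size s) c i *: s`_i = 0 -> forall i, c i = 0.

Definition span_dim (K : fieldType) (M : lmodType K) (s : seq M) (d : nat) : Prop :=
  exists b : seq M, [/\ size b = d, lin_free b & forall x, in_span x s <-> in_span x b].

Definition generates (K : fieldType) (n : nat) (M : lmodType K)
  (X D : 'I_n -> {linear M -> M}) (gs : seq M) : Prop :=
  forall m : M, exists r s : nat, in_span m (Wgens X D r s gs).

Definition is_char_coeffs (K : fieldType) (n : nat) (M : lmodType K)
  (X D : 'I_n -> {linear M -> M}) (gs : seq M) (a : 'I_n.+1 -> 'I_n.+1 -> int) : Prop :=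
  exists N : nat, forall r s : nat, (N <= r)%N -> (N <= s)%N ->
    exists d : nat, span_dim (Wgens X D r s gs) d /\
      (d%:Z = \sum_(i < n.+1) \sum_(j < n.+1)
                 a i j * ('C(r + i, i))%:Z * ('C(s + j, j))%:Z).

(* binom(x + k, k) = (x+1)(x+2)...(x+k)/k! as a polynomial expression *)
Definition binomP (R : comRingType) (x : R) (k : nat) : R :=
  \prod_(l < k) (x + (l.+1)%:R).

Definition weyl_charpoly (n : nat) (a : 'I_n.+1 -> 'I_n.+1 -> int) : {mpoly rat[2]} :=
  \sum_(i < n.+1) \sum_(j < n.+1)
     ((a i j)%:~R / ((i`!)%:R * (j`!)%:R)) *:
       (binomP 'X_(0 : 'I_2) i * binomP 'X_(1 : 'I_2) j).

Definition is_lexmax (n : nat) (a : 'I_n.+1 -> 'I_n.+1 -> int) (i j : 'I_n.+1) : Prop :=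
  a i j != 0 /\ forall i' j' : 'I_n.+1, a i' j' != 0 ->
    (i' < i)%N \/ (i' = i /\ (j' <= j)%N).

Definition is_revlexmax (n : nat) (a : 'I_n.+1 -> 'I_n.+1 -> int) (i j : 'I_n.+1) : Prop :=
  a i j != 0 /\ forall i' j' : 'I_n.+1, a i' j' != 0 ->
    (j' < j)%N \/ (j' = j /\ (i' <= i)%N).

(* Main.v *)
Require Import Defs.
From HB Require Import structures.
From mathcomp Require Import all_boot all_order all_algebra.
From mathcomp Require Import mpoly.
From Stdlib Require List.
From mathcomp.real_closed Require polyrcf.
From mathcomp Require Import ring zify.
Import Order.TTheory GRing.Theory Num.Theory.
Set Implicit Arguments. Unset Strict Implicit. Unset Printing Implicit Defensive.
Local Open Scope ring_scope.

Section Span.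
Variables (K : fieldType) (M : lmodType K).
Implicit Types (s t : seq M) (x y : M).

Lemma S0 t : in_span 0 t.
Proof. by exists (fun _ => 0); rewrite big1 // => i _; rewrite scale0r. Qed.

Lemma Sadd t x y : in_span x t -> in_span y t -> in_span (x + y) t.
Proof.
move=> [c ->] [e ->]; exists (fun i => c i + e i).
by rewrite -big_split; apply: eq_bigr => i _; rewrite scalerDl.
Qed.

Lemma Sscale t c x : in_span x t -> in_span (c *: x) t.
Proof.
move=> [e ->]; exists (fun i => c * e i).
by rewrite scaler_sumr; apply: eq_bigr => i _; rewrite scalerA.
Qed.

Lemma Ssum t m (F : 'I_m -> M) : (forall i, in_span (F i) t) -> in_span (\sum_i F i) t.
Proof.
elim: m F => [|m IH] F HF; first by rewrite big_ord0; apply: S0.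
by rewrite big_ord_recr /=; apply: Sadd; [apply: IH => i|].
Qed.

Lemma Smem t x : x \in t -> in_span x t.
Proof.
move=> xt; exists (fun i => (nat_of_ord i == index x t)%:R).
have ix : (index x t < size t)%N by rewrite index_mem.
rewrite (bigD1 (Ordinal ix)) //= eqxx scale1r nth_index // big1 ?addr0 //.
move=> i /eqP ne; case: eqP => [e|]; last by rewrite scale0r.
by case: ne; apply: val_inj.
Qed.

Lemma Slin (f : M -> M) s t x :
  (forall u v, f (u + v) = f u + f v) -> (forall c u, f (c *: u) = c *: f u) ->
  in_span x s -> (forall i : 'I_(size s), in_span (f s`_i) t) -> in_span (f x) t.
Proof.
move=> fD fZ [c ->] H.
have f0 : f 0 = 0.
  by have := fZ 0 0; rewrite !scale0r.
have -> : f (\sum_(i < size s) c i *: s`_i) = \sum_(i < size s) c i *: f s`_i.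
  elim: (size s) c => [|m IH] c; first by rewrite !big_ord0.
  rewrite !big_ord_recr /= fD fZ; congr (_ + _).
  exact: (IH (fun i => c (widen_ord (leqnSn m) i))).
by apply: Ssum => i; apply: Sscale.
Qed.

Lemma Strans s t x :
  in_span x s -> (forall i : 'I_(size s), in_span s`_i t) -> in_span x t.
Proof. by move=> H1 H2; apply: (@Slin id) => //. Qed.

Lemma Dim s t d1 d2 : span_dim s d1 -> span_dim t d2 ->
  (forall i : 'I_(size s), in_span s`_i t) -> (d1 <= d2)%N.
Proof.
move=> [b1 [<- f1 e1]] [b2 [<- f2 e2]] st.
have H : forall i : 'I_(size b1), exists u : {ffun 'I_(size b2) -> K},
    b1`_i = \sum_(l < size b2) u l *: b2`_l.
  move=> i.
  have : in_span b1`_i b2.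
    apply/e2; apply: (Strans _ st); apply/e1; apply/Smem; apply: mem_nth; exact: ltn_ord.
  by move=> [c Hc]; exists (finfun c); rewrite Hc; apply: eq_bigr => l _; rewrite ffunE.
have [u Hu] := fin_all_exists H.
pose C := \matrix_(i < size b1, l < size b2) u i l.
have kerC : forall v : 'rV_(size b1), v *m C = 0 -> v = 0.
  move=> v vC; apply/rowP => i; rewrite mxE.
  apply: (f1 (fun i => v 0 i)).
  transitivity (\sum_(l < size b2) (v *m C) 0 l *: b2`_l); last first.
    by rewrite vC big1 // => l _; rewrite mxE scale0r.
  under eq_bigr => j _ do rewrite Hu scaler_sumr.
  rewrite exchange_big /=; apply: eq_bigr => l _.
  rewrite mxE scaler_suml; apply: eq_bigr => j _; rewrite scalerA mxE.
  by [].
have k0 : kermx C = 0.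
  apply/row_matrixP => i; rewrite row0; apply: kerC.
  by rewrite -row_mul mulmx_ker row0.
have := mxrank_ker C; rewrite k0 mxrank0 => /esym /eqP; rewrite subn_eq0 => le.
exact: leq_trans le (rank_leq_col C).
Qed.

End Span.

Section Fold.
Variables (K : fieldType) (M : lmodType K) (n : nat).

Definition fld (Y : 'I_n -> M -> M) (a : 'I_n -> nat) (l : seq 'I_n) (v : M) :=
  foldr (fun i w => iter (a i) (Y i) w) v l.

Lemma fld_ext Y a a' l v : (forall i, i \in l -> a i = a' i) -> fld Y a l v = fld Y a' l v.
Proof.
elim: l => //= i l IH H; rewrite H ?mem_head // IH // => j jl.
by apply: H; rewrite in_cons jl orbT.
Qed.

Lemma iterC (f g : M -> M) m v : (forall u, f (g u) = g (f u)) ->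
  f (iter m g v) = iter m g (f v).
Proof. by move=> H; elim: m => //= m IH; rewrite H IH. Qed.

Definition incr (a : 'I_n -> nat) j := fun i => (a i + (i == j))%N.
Definition decr (a : 'I_n -> nat) j := fun i => (a i - (i == j))%N.

Lemma fld_incr (Y : 'I_n -> M -> M) (HY : forall i j u, Y i (Y j u) = Y j (Y i u))
  a j l v : uniq l -> j \in l -> Y j (fld Y a l v) = fld Y (incr a j) l v.
Proof.
elim: l => //= i l IH /andP [il ul]; rewrite in_cons => /orP [/eqP eij|jl].
  subst j; rewrite (@fld_ext _ (incr a i) a); last first.
    by move=> k kl; rewrite /incr; case: eqP => [e|]; [by subst; rewrite kl in il|rewrite addn0].
  by rewrite /incr eqxx addn1.
rewrite iterC; last by move=> u; apply: HY.
rewrite IH //; congr iter; rewrite /incr; case: eqP => [e|]; last by rewrite addn0.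
by subst; rewrite jl in il.
Qed.

Lemma fld_comm (Y : 'I_n -> M -> M) (f : M -> M) a l v :
  (forall i, i \in l -> forall u, f (Y i u) = Y i (f u)) -> f (fld Y a l v) = fld Y a l (f v).
Proof.
elim: l => //= i l IH H; rewrite iterC; last by apply: H; rewrite mem_head.
by rewrite IH // => k kl; apply: H; rewrite in_cons kl orbT.
Qed.

Lemma iter_lin (f : {linear M -> M}) m c u w :
  iter m f (u + c *: w) = iter m f u + c *: iter m f w.
Proof. by elim: m => //= m ->; rewrite linearD linearZ. Qed.

Lemma fld_lin (Y : 'I_n -> {linear M -> M}) a l c u w :
  fld (fun i => Y i) a l (u + c *: w) = fld (fun i => Y i) a l u + c *: fld (fun i => Y i) a l w.
Proof. by elim: l => //= i l ->; rewrite iter_lin. Qed.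

Variables (X D : 'I_n -> {linear M -> M}).
Hypothesis HW : weyl_rel X D.

Lemma iterW i j m w : D j (iter m (X i) w) =
  iter m (X i) (D j w) + ((i == j) * m)%:R *: iter m.-1 (X i) w.
Proof.
case: HW => _ _ H.
elim: m => [|m IH] /=; first by rewrite muln0 scale0r addr0.
rewrite H IH linearD linearZ /= -addrA; congr (_ + _).
rewrite [j == i]eq_sym; case: m {IH} => [|m] /=; first by rewrite muln0 scale0r add0r muln1.
by rewrite [in RHS]mulnS natrD scalerDl addrC.
Qed.

Lemma fldW j a l w : uniq l -> j \in l ->
  D j (fld (fun i => X i) a l w) =
  fld (fun i => X i) a l (D j w) + (a j)%:R *: fld (fun i => X i) (decr a j) l w.
Proof.
case: (HW) => _ _ H.
elim: l => //= i l IH /andP [il ul]; rewrite in_cons => /orP [/eqP eij|jl].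
  subst j; rewrite iterW eqxx mul1n; congr (_ + _).
    congr iter; apply: fld_comm => k kl u; rewrite H.
    by case: eqP => [e|]; [by subst; rewrite kl in il|rewrite scale0r addr0].
  rewrite /decr eqxx subn1; congr (_ *: iter _ _ _).
  apply: fld_ext => k kl; case: eqP => [e|]; [by subst; rewrite kl in il|by rewrite subn0].
rewrite iterW IH //.
have -> : (i == j) = false by apply/eqP => e; subst; rewrite jl in il.
rewrite mul0n scale0r addr0 iter_lin; congr (_ + _ *: iter _ _ _).
by rewrite /decr; case: eqP => [e|]; [by subst; rewrite jl in il|rewrite subn0].
Qed.

End Fold.

Lemma In_mem (T : eqType) (x : T) s : List.In x s <-> x \in s.
Proof.
elim: s => //= y s IH; rewrite in_cons; split.
  by case=> [->|/IH ->]; rewrite ?eqxx ?orbT.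
by case/orP => [/eqP ->|/IH]; [left|right].
Qed.

Lemma In_map_mem (T : Type) (U : eqType) (f : T -> U) L x :
  List.In x L -> f x \in map f L.
Proof. by elim: L => //= y L IH [->|/IH]; rewrite in_cons ?eqxx // => ->; rewrite orbT. Qed.

Lemma mem_map_In (T : Type) (U : eqType) (f : T -> U) L y :
  y \in map f L -> exists x, List.In x L /\ y = f x.
Proof.
elim: L => //= z L IH; rewrite in_cons => /orP [/eqP ->|/IH [x [xL ->]]].
  by exists z; split => //; left.
by exists x; split => //; right.
Qed.

Lemma In_map (T U : Type) (f : T -> U) L x : List.In x L -> List.In (f x) (map f L).
Proof. by elim: L => //= y L IH [->|/IH]; [left|right]. Qed.

Lemma In_map_inv (T U : Type) (f : T -> U) L y :
  List.In y (map f L) -> exists x, List.In x L /\ y = f x.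
Proof.
elim: L => //= z L IH [<-|/IH [x [xL ->]]]; first by exists z; split => //; left.
by exists x; split => //; right.
Qed.

Lemma In_cat (T : Type) (x : T) s1 s2 : List.In x (s1 ++ s2) <-> List.In x s1 \/ List.In x s2.
Proof. exact: List.in_app_iff. Qed.

Lemma In_pairs (A B : Type) (x : A) (y : B) LA LB :
  List.In x LA -> List.In y LB ->
  List.In (x, y) (flatten [seq [seq (a, b) | b <- LB] | a <- LA]).
Proof.
elim: LA => //= z LA IH [<- yB|xA yB]; apply/List.in_app_iff.
  by left; apply: In_map.
by right; apply: IH.
Qed.

Lemma pairs_In (A B : Type) (x : A) (y : B) LA LB :
  List.In (x, y) (flatten [seq [seq (a, b) | b <- LB] | a <- LA]) ->
  List.In x LA /\ List.In y LB.
Proof.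
elim: LA => //= z LA IH H; case: (proj1 (List.in_app_iff _ _ _) H) => {}H.
  have [b [bB e]] := In_map_inv H.
  by case: e => -> ->; split => //; left.
by have [xA yB] := IH H; split => //; right.
Qed.

Section ML.
Variable n : nat.

Lemma ML1 r (al : 'I_n -> nat) : List.In al (multi_le n r) -> (\sum_i al i <= r)%N.
Proof.
rewrite /multi_le => H; have [a [aL e]] := In_map_inv H; subst al.
by move: aL => /In_mem; rewrite mem_filter => /andP [].
Qed.

Lemma ML2 r (al : 'I_n -> nat) : (\sum_i al i <= r)%N ->
  exists al', List.In al' (multi_le n r) /\ forall i, al' i = al i.
Proof.
move=> Hs.
have le i : (al i <= r)%N.
  apply: leq_trans Hs; rewrite (bigD1 i) //=; exact: leq_addr.
pose a : {ffun 'I_n -> 'I_r.+1} := [ffun i => inord (al i)].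
have ai i : nat_of_ord (a i) = al i by rewrite ffunE inordK // ltnS.
exists (fun i => nat_of_ord (a i)); split => //.
apply: (In_map (fun a : {ffun 'I_n -> 'I_r.+1} => fun i => nat_of_ord (a i))).
apply/In_mem; rewrite mem_filter mem_enum andbT.
by rewrite (eq_bigr _ (fun i _ => ai i)).
Qed.

End ML.

Section Mod.
Variables (K : fieldType) (n : nat) (M : lmodType K).
Variables (X D : 'I_n -> {linear M -> M}).
Hypothesis HW : weyl_rel X D.

Lemma mono_ext (Y : 'I_n -> {linear M -> M}) al al' v :
  (forall i, al i = al' i) -> mono_act Y al v = mono_act Y al' v.
Proof. by move=> H; apply: (fld_ext (fun i => Y i)) => i _. Qed.

Lemma MEMW r s gs al be g : (\sum_i al i <= r)%N -> (\sum_i be i <= s)%N -> g \in gs ->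
  mono_act X al (mono_act D be g) \in Wgens X D r s gs.
Proof.
move=> /(ML2 (n:=n)) [al' [Ha Ha']] /(ML2 (n:=n)) [be' [Hb Hb']] gg.
apply/flatten_mapP; exists g => //.
rewrite (mono_ext _ _ (fun i => esym (Ha' i))) (mono_ext _ _ (fun i => esym (Hb' i))).
apply: (@In_map_mem _ _ (fun ab : ('I_n -> nat) * ('I_n -> nat) => mono_act X ab.1 (mono_act D ab.2 g)) _ (al', be')).
exact: In_pairs.
Qed.

Lemma WMEM r s gs y : y \in Wgens X D r s gs -> exists al be g,
  [/\ g \in gs, (\sum_i al i <= r)%N, (\sum_i be i <= s)%N &
      y = mono_act X al (mono_act D be g)].
Proof.
move=> /flatten_mapP [g gg] H.
have [[al be] [Hab ->]] := mem_map_In H.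
have [Ha Hb] := pairs_In Hab.
by exists al, be, g; split => //; [apply: ML1 Ha|apply: ML1 Hb].
Qed.

Lemma sum_incr (al : 'I_n -> nat) j : (\sum_i incr al j i = \sum_i al i + 1)%N.
Proof.
rewrite big_split /=; congr addn.
by rewrite (bigD1 j) //= eqxx big1 ?addn0 // => i /negbTE ->.
Qed.

Lemma sum_decr (al : 'I_n -> nat) j : (\sum_i decr al j i <= \sum_i al i)%N.
Proof. by apply: leq_sum => i _; apply: leq_subr. Qed.

Definition PP (h : seq M) r s y := in_span y (Wgens X D r s h).

Lemma linD (f : {linear M -> M}) : forall u v, f (u + v) = f u + f v.
Proof. by move=> u v; rewrite linearD. Qed.
Lemma linZ (f : {linear M -> M}) : forall c u, f (c *: u) = c *: f u.
Proof. by move=> c u; rewrite linearZ. Qed.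

Lemma Pmono h r s r' s' y : PP h r s y -> (r <= r')%N -> (s <= s')%N -> PP h r' s' y.
Proof.
move=> Hy rr ss; apply: (Strans Hy) => i.
have /WMEM [al [be [g [gh Ha Hb ->]]]] : (Wgens X D r s h)`_i \in Wgens X D r s h.
  by apply: mem_nth.
by apply: Smem; apply: MEMW => //; [apply: leq_trans rr|apply: leq_trans ss].
Qed.

Lemma PX h r s y i : PP h r s y -> PP h r.+1 s (X i y).
Proof.
move=> Hy; apply: (Slin (linD _) (linZ _) Hy) => l.
have /WMEM [al [be [g [gh Ha Hb ->]]]] : (Wgens X D r s h)`_l \in Wgens X D r s h.
  by apply: mem_nth.
case: HW => HX _ _.
rewrite /mono_act -/(fld _ _ _ _).
rewrite (fld_incr (Y := fun i => X i)) ?enum_uniq ?mem_enum //.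
apply: Smem; apply: MEMW => //; by rewrite sum_incr addn1.
Qed.

Lemma PD h r s y i : PP h r s y -> PP h r s.+1 (D i y).
Proof.
move=> Hy; apply: (Slin (linD _) (linZ _) Hy) => l.
have /WMEM [al [be [g [gh Ha Hb ->]]]] : (Wgens X D r s h)`_l \in Wgens X D r s h.
  by apply: mem_nth.
case: (HW) => _ HD _.
rewrite /mono_act -/(fld _ _ _ _).
rewrite (fldW HW) ?enum_uniq ?mem_enum //.
rewrite -/(fld _ _ _ _) (fld_incr (Y := fun i => D i)) ?enum_uniq ?mem_enum //.
apply: Sadd.
  by apply: Smem; apply: MEMW => //; rewrite sum_incr addn1.
apply: Sscale; apply: Smem; apply: MEMW => //; last exact: ltnW.
exact: leq_trans (sum_decr _ _) Ha.
Qed.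

End Mod.

Definition Fc (n : nat) (c : 'I_n.+1 -> 'I_n.+1 -> int) (r s : nat) : int :=
  \sum_(i < n.+1) \sum_(j < n.+1) c i j * ('C(r + i, i))%:Z * ('C(s + j, j))%:Z.

Section Sand.
Variables (K : fieldType) (n : nat) (M : lmodType K).
Variables (X D : 'I_n -> {linear M -> M}).
Hypothesis HW : weyl_rel X D.

Lemma PXiter h r s v m i : PP X D h r s v -> PP X D h (r + m) s (iter m (X i) v).
Proof.
elim: m => [|m IH] H; first by rewrite addn0.
by rewrite addnS /=; apply: PX => //; apply: IH.
Qed.

Lemma PDiter h r s v m i : PP X D h r s v -> PP X D h r (s + m) (iter m (D i) v).
Proof.
elim: m => [|m IH] H; first by rewrite addn0.
by rewrite addnS /=; apply: PD => //; apply: IH.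
Qed.

Lemma PXfld h r s v al l : PP X D h r s v ->
  PP X D h (r + \sum_(i <- l) al i) s (fld (fun i => X i) al l v).
Proof.
elim: l => [|i l IH] H /=; first by rewrite big_nil addn0.
by rewrite big_cons addnA addnAC; apply: PXiter; apply: IH.
Qed.

Lemma PDfld h r s v al l : PP X D h r s v ->
  PP X D h r (s + \sum_(i <- l) al i) (fld (fun i => D i) al l v).
Proof.
elim: l => [|i l IH] H /=; first by rewrite big_nil addn0.
by rewrite big_cons addnA addnAC; apply: PDiter; apply: IH.
Qed.

Lemma sum_enum (al : 'I_n -> nat) : (\sum_(i <- enum 'I_n) al i = \sum_i al i)%N.
Proof. by rewrite big_enum. Qed.

Lemma gen_k h (gs : seq M) : generates X D h -> exists k, forall g, g \in gs -> PP X D h k k g.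
Proof.
move=> Hg; elim: gs => [|g gs [k Hk]]; first by exists 0%N.
have [r0 [s0 H0]] := Hg g.
exists (maxn k (maxn r0 s0)) => g'; rewrite in_cons => /orP [/eqP ->|gg].
  by apply: (Pmono H0); rewrite !leq_max leqnn ?orbT.
by apply: (Pmono (Hk _ gg)); rewrite leq_max leqnn.
Qed.

Lemma incl (g h : seq M) : generates X D h -> exists k, forall r s r' s',
  (r + k <= r')%N -> (s + k <= s')%N ->
  forall i : 'I_(size (Wgens X D r s g)), in_span (Wgens X D r s g)`_i (Wgens X D r' s' h).
Proof.
move=> Hg; have [k Hk] := gen_k g Hg.
exists k => r s r' s' rr ss i.
have /WMEM [al [be [g0 [gg Ha Hb ->]]]] : (Wgens X D r s g)`_i \in Wgens X D r s g.
  by apply: mem_nth.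
have H1 := PDfld be (enum 'I_n) (Hk _ gg).
have H2 := PXfld al (enum 'I_n) H1.
rewrite !sum_enum in H2.
apply: (Pmono H2).
  by rewrite addnC; apply: leq_trans rr; rewrite leq_add2r.
by rewrite addnC; apply: leq_trans ss; rewrite leq_add2r.
Qed.

Lemma sandwich g h a b : generates X D h ->
  is_char_coeffs X D g a -> is_char_coeffs X D h b ->
  exists N k, forall r s r' s', (N <= r)%N -> (N <= s)%N ->
    (r + k <= r')%N -> (s + k <= s')%N -> Fc a r s <= Fc b r' s'.
Proof.
move=> Hg [Na Ha] [Nb Hb]; have [k Hk] := incl g Hg.
exists (maxn Na Nb), k => r s r' s' Nr Ns rr ss.
rewrite !geq_max in Nr Ns; case/andP: Nr => Nar Nbr; case/andP: Ns => Nas Nbs.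
rewrite /Fc; have [d1 [D1 <-]] := Ha r s Nar Nas.
have [d2 [D2 <-]] := Hb r' s' (leq_trans Nbr (leq_trans (leq_addr _ _) rr))
   (leq_trans Nbs (leq_trans (leq_addr _ _) ss)).
rewrite lez_nat; exact: Dim D1 D2 (Hk _ _ _ _ rr ss).
Qed.

Lemma nonneg g a : is_char_coeffs X D g a ->
  exists N, forall r s, (N <= r)%N -> (N <= s)%N -> 0 <= Fc a r s.
Proof.
move=> [N H]; exists N => r s Nr Ns; rewrite /Fc; have [d [_ <-]] := H r s Nr Ns; by [].
Qed.

End Sand.

Lemma Ucmp (p q : {poly rat}) d N k :
  (forall t, (N <= t)%N -> p.[t%:R] <= q.[(t + k)%:R]) ->
  (size p <= d.+1)%N -> (size q <= d.+1)%N -> p`_d <= q`_d.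
Proof.
move=> H sp sq.
pose w := q \Po ('X + (k%:R)%:P).
have sw : size w = size q by rewrite size_comp_poly2 // size_XaddC.
have wd : w`_d = q`_d.
  have [e|ne] := eqVneq (size q) d.+1.
    have := @lead_coef_comp _ q ('X + (k%:R)%:P); rewrite size_XaddC lead_coefXaddC expr1n mulr1.
    by move=> /(_ isT); rewrite !lead_coefE sw e.
  have sq' : (size q <= d)%N by rewrite leq_eqVlt (negbTE ne) in sq.
  by rewrite !nth_default // sw.
have wev t : w.[t%:R] = q.[(t + k)%:R] by rewrite horner_comp !hornerE natrD.
pose r := w - p.
have rd : r`_d = q`_d - p`_d by rewrite coefB wd.
rewrite -subr_ge0 -rd leNgt; apply/negP => rlt.
have sr : size r = d.+1.
  apply/eqP; rewrite eqn_leq; apply/andP; split.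
    by apply: leq_trans (size_polyD _ _) _; rewrite size_polyN geq_max sw sq sp.
  by rewrite ltnNge; apply/negP => le; move: rlt; rewrite nth_default.
have lr : lead_coef r = r`_d by rewrite lead_coefE sr.
have : 0 < lead_coef (- r) by rewrite lead_coefN lr oppr_gt0.
move=> /polyrcf.poly_pinfty_gt_lc [x0 Hx0].
pose t := maxn N (Num.Def.archi_bound `|x0|).
have tx : x0 <= t%:R.
  apply: le_trans (ler_norm x0) _; apply: ltW.
  apply: lt_le_trans (archi_boundP (normr_ge0 x0)) _.
  by rewrite ler_nat leq_maxr.
have := Hx0 _ tx; rewrite lead_coefN lr hornerN lerN2.
have : 0 <= r.[t%:R] by rewrite hornerD hornerN wev subr_ge0; apply: H; exact: leq_maxl.
move=> r0 r1; have := le_trans r0 r1; by rewrite leNgt rlt.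
Qed.

Lemma GEN (I : finType) (c mu : I -> rat) (P : I -> {poly rat}) (e : I -> nat) d :
  (forall k, (size (P k - mu k *: 'X^(e k))%R <= e k)%N) ->
  (forall k, c k != 0 -> (e k <= d)%N) ->
  forall m, (d <= m)%N -> (\sum_k c k *: P k)`_m = \sum_k c k * mu k * (e k == m)%:R.
Proof.
move=> HP He m dm; rewrite coef_sum; apply: eq_bigr => k _.
rewrite coefZ; have [->|ck] := eqVneq (c k) 0; first by rewrite !mul0r.
have -> : P k = mu k *: 'X^(e k) + (P k - mu k *: 'X^(e k)) by rewrite addrC subrK.
rewrite coefD coefZ coefXn [X in _ + X]nth_default; last first.
  exact: leq_trans (HP k) (leq_trans (He k ck) dm).
by rewrite addr0 mulrA eq_sym.
Qed.

Lemma GENsize (I : finType) (c mu : I -> rat) (P : I -> {poly rat}) (e : I -> nat) d :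
  (forall k, (size (P k - mu k *: 'X^(e k))%R <= e k)%N) ->
  (forall k, c k != 0 -> (e k <= d)%N) ->
  (size (\sum_k c k *: P k)%R <= d.+1)%N.
Proof.
move=> HP He; apply/leq_sizeP => m dm.
rewrite (GEN HP He (ltnW dm)) big1 // => k _.
have [->|ck] := eqVneq (c k) 0; first by rewrite !mul0r.
have : (e k != m) by rewrite neq_ltn (leq_ltn_trans (He k ck) dm).
by move/negbTE => ->; rewrite mulr0.
Qed.

Lemma binom_dec (mu : rat) i :
  (size (binomP (mu%:P * 'X) i - (mu ^+ i) *: 'X^i)%R <= i)%N.
Proof.
elim: i => [|i IH]; first by rewrite /binomP big_ord0 expr0 scale1r expr0 subrr size_poly0.
rewrite /binomP big_ord_recr /= -/(binomP _ i).
set B := binomP _ i.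
have -> : B * (mu%:P * 'X + (i.+1)%:R) - mu ^+ i.+1 *: 'X^(i.+1) =
   ((mu ^+ i * (i.+1)%:R) *: 'X^i) +
   (B - mu ^+ i *: 'X^i) * (mu%:P * 'X + ((i.+1)%:R)%:P).
  rewrite -!mul_polyC !(polyCM, rmorphXn) /= polyC_natr !exprS; ring.
apply: leq_trans (size_polyD _ _) _; rewrite geq_max; apply/andP; split.
  by apply: leq_trans (size_scale_leq _ _) _; rewrite size_polyXn.
apply: leq_trans (size_polyMleq _ _) _.
have s2 : (size (mu%:P * 'X + ((i.+1)%:R)%:P)%R <= 2)%N.
  apply: leq_trans (size_polyD _ _) _; rewrite geq_max; apply/andP; split.
    by rewrite mul_polyC; apply: leq_trans (size_scale_leq _ _) _; rewrite size_polyX.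
  exact: leq_trans (size_polyC_leq1 _) _.
by rewrite -subn1 leq_subLR; apply: leq_trans (leq_add IH s2) _; rewrite addn2 add1n.
Qed.

Lemma prod_ffact t i : (\prod_(l < i) (t + l.+1) = (t + i) ^_ i)%N.
Proof.
elim: i => [|i IH]; first by rewrite big_ord0 ffactn0.
by rewrite big_ord_recr /= IH ffactnS addnS /= mulnC.
Qed.

Lemma binomP_nat (t i : nat) : binomP (t%:R : rat) i = ('C(t + i, i) * i`!)%:R.
Proof.
rewrite bin_ffact -prod_ffact natr_prod /binomP; apply: eq_bigr => l _.
by rewrite natrD.
Qed.

Lemma binomP_horner (mu x : rat) i : (binomP (mu%:P * 'X) i).[x] = binomP (mu * x) i.
Proof.
rewrite /binomP horner_prod; apply: eq_bigr => l _.
by rewrite !hornerE -polyC_natr hornerC.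
Qed.

Lemma natZ (n : nat) : (n%:Z)%:~R = n%:R :> rat.
Proof. by rewrite -pmulrn. Qed.

Lemma fact_neq0 i : (i`!)%:R != 0 :> rat.
Proof. by rewrite pnatr_eq0 -lt0n fact_gt0. Qed.

Section OneD.
Variable n : nat.

Definition rowpoly (ga : 'I_n.+1 -> rat) : {poly rat} :=
  \sum_i (ga i / (i`!)%:R) *: binomP (1%:P * 'X) i.

Lemma rowpoly_ev ga (t : nat) :
  (rowpoly ga).[t%:R] = \sum_i ga i * ('C(t + i, i))%:R.
Proof.
rewrite /rowpoly horner_sum; apply: eq_bigr => i _.
rewrite hornerZ binomP_horner mul1r binomP_nat natrM.
by field; rewrite fact_neq0.
Qed.

Lemma rowpoly_coef ga (d : 'I_n.+1) : (forall i : 'I_n.+1, (d < i)%N -> ga i = 0) ->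
  (size (rowpoly ga) <= d.+1)%N /\ (rowpoly ga)`_d = ga d / (d`!)%:R.
Proof.
move=> H.
have HP : forall i : 'I_n.+1,
    (size (binomP (1%:P * 'X : {poly rat}) i - (fun i : 'I_n.+1 => 1 ^+ i) i *: 'X^(nat_of_ord i))%R <= i)%N.
  by move=> i /=; apply: binom_dec.
have He : forall i : 'I_n.+1, ga i / (i`!)%:R != 0 -> (i <= d)%N.
  move=> i; rewrite leqNgt; apply: contra => lt; by rewrite H // mul0r.
split; first exact: (@GENsize _ (fun i => ga i / (i`!)%:R) (fun i : 'I_n.+1 => 1 ^+ i)
   (fun i => binomP (1%:P * 'X) i) (fun i => nat_of_ord i) d HP He).
rewrite /rowpoly (@GEN _ (fun i => ga i / (i`!)%:R) (fun i : 'I_n.+1 => 1 ^+ i)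
   (fun i => binomP (1%:P * 'X) i) (fun i => nat_of_ord i) d HP He d (leqnn d)) (bigD1 d) //= eqxx expr1n mulr1 mulr1.
rewrite big1 ?addr0 // => i ne; case: eqP => [e|]; last by rewrite mulr0.
by move: ne; rewrite (_ : i = d) ?eqxx //; apply: val_inj.
Qed.

Lemma Cmp1 (ga de : 'I_n.+1 -> int) (d : 'I_n.+1) N k :
  (forall i : 'I_n.+1, (d < i)%N -> ga i = 0 /\ de i = 0) ->
  (forall t, (N <= t)%N -> \sum_i ga i * ('C(t + i, i))%:Z <= \sum_i de i * ('C(t + k + i, i))%:Z) ->
  ga d <= de d.
Proof.
move=> Hz H.
have Z1 : forall i : 'I_n.+1, (d < i)%N -> (ga i)%:~R = 0 :> rat.
  by move=> i lt; rewrite (proj1 (Hz i lt)).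
have Z2 : forall i : 'I_n.+1, (d < i)%N -> (de i)%:~R = 0 :> rat.
  by move=> i lt; rewrite (proj2 (Hz i lt)).
have [s1 c1] := @rowpoly_coef (fun i => (ga i)%:~R) d Z1.
have [s2 c2] := @rowpoly_coef (fun i => (de i)%:~R) d Z2.
have := @Ucmp _ _ d N k _ s1 s2; rewrite c1 c2.
rewrite ler_pM2r ?invr_gt0 ?ltr0n ?fact_gt0 // ler_int; apply.
move=> t Nt; rewrite !rowpoly_ev.
have := H t Nt; rewrite -(ler_int rat) !rmorph_sum /=.
by under eq_bigr => i _ do rewrite rmorphM /= natZ;
   under [X in _ <= X]eq_bigr => i _ do rewrite rmorphM /= natZ.
Qed.

Definition zr : 'I_n.+1 -> 'I_n.+1 -> int := fun _ _ => 0.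

Lemma Fc_zr r s : Fc zr r s = 0.
Proof. by rewrite /Fc big1 // => i _; rewrite big1 // => j _; rewrite /zr !mul0r. Qed.

Lemma TOP2 (c e : 'I_n.+1 -> 'I_n.+1 -> int) N k (p q : 'I_n.+1) :
  (forall r s, (N <= r)%N -> (N <= s)%N -> Fc c r s <= Fc e (r + k) (s + k)) ->
  (forall i j : 'I_n.+1, (p < i)%N -> c i j = 0 /\ e i j = 0) ->
  (forall j : 'I_n.+1, (q < j)%N -> c p j = 0 /\ e p j = 0) ->
  c p q <= e p q.
Proof.
move=> H Hr Hc.
apply: (@Cmp1 (c p) (e p) q N k Hc) => s Ns.
pose ga i := \sum_j c i j * ('C(s + j, j))%:Z.
pose de i := \sum_j e i j * ('C(s + k + j, j))%:Z.
have := @Cmp1 ga de p N k.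
have -> : ga p = \sum_j c p j * ('C(s + j, j))%:Z by [].
have -> : de p = \sum_j e p j * ('C(s + k + j, j))%:Z by [].
apply.
  move=> i lt; split; apply: big1 => j _.
    by rewrite (proj1 (Hr i j lt)) mul0r.
  by rewrite (proj2 (Hr i j lt)) mul0r.
move=> t Nt; have := H t s Nt Ns.
have SW : forall (f : 'I_n.+1 -> 'I_n.+1 -> int) (u v : nat),
  \sum_(i < n.+1) (\sum_(j < n.+1) f i j * ('C(v + j, j))%:Z) * ('C(u + i, i))%:Z =
  \sum_(i < n.+1) \sum_(j < n.+1) f i j * ('C(u + i, i))%:Z * ('C(v + j, j))%:Z.
  move=> f u v; apply: eq_bigr => i _; rewrite mulr_suml; apply: eq_bigr => j _.
  by rewrite mulrAC.
by rewrite /ga /de !SW.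
Qed.

End OneD.

Lemma down_ind (m : nat) (P : 'I_m -> Prop) :
  (forall x : 'I_m, (forall y : 'I_m, (x < y)%N -> P y) -> P x) -> forall x, P x.
Proof.
move=> H x.
have : forall d (x : 'I_m), (m - x <= d)%N -> P x.
  elim=> [|d IH] y ley; apply: H => z lt.
    by move: ley (ltn_ord z) lt; lia.
  by apply: IH; move: ley (ltn_ord z) lt; lia.
by apply; exact: leqnn.
Qed.

Section Lex.
Variable n : nat.
Implicit Types a b c e : 'I_n.+1 -> 'I_n.+1 -> int.

Definition S_ab a b N k :=
  forall r s, (N <= r)%N -> (N <= s)%N -> Fc a r s <= Fc b (r + k) (s + k).

Lemma LEX a b N k (p q : 'I_n.+1) :
  S_ab a b N k -> S_ab b a N k -> S_ab (@zr n) a N 0 ->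
  is_lexmax b p q -> is_lexmax a p q /\ a p q = b p q.
Proof.
move=> Sab Sba Pa [bpq Hb].
have rowb : forall i j : 'I_n.+1, (p < i)%N -> b i j = 0.
  move=> i j lt; apply/eqP; apply: contraT => nz.
  by case: (Hb _ _ nz) => [|[e _]]; [rewrite ltnNge ltnW|rewrite e ltnn in lt].
have colb : forall j : 'I_n.+1, (q < j)%N -> b p j = 0.
  move=> j lt; apply/eqP; apply: contraT => nz.
  by case: (Hb _ _ nz) => [|[_ le]]; [rewrite ltnn|rewrite ltnNge le in lt].
have rowa : forall i j : 'I_n.+1, (p < i)%N -> a i j = 0.
  move=> i; elim/down_ind: i => i IHi j lt.
  elim/down_ind: j => j IHj.
  apply/eqP; rewrite eq_le; apply/andP; split.
    rewrite -(rowb i j lt); apply: (TOP2 Sab).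
      move=> i' j' lt'; split; [apply: IHi => //; exact: ltn_trans lt'|apply: rowb].
      exact: ltn_trans lt'.
    by move=> j' lt'; split; [apply: IHj|apply: rowb].
  have := TOP2 Pa (p := i) (q := j); rewrite /zr; apply.
    by move=> i' j' lt'; split => //; apply: IHi => //; exact: ltn_trans lt'.
  by move=> j' lt'; split => //; apply: IHj.
have cola : forall j : 'I_n.+1, (q < j)%N -> a p j = 0.
  move=> j; elim/down_ind: j => j IHj lt.
  apply/eqP; rewrite eq_le; apply/andP; split.
    rewrite -(colb j lt); apply: (TOP2 Sab).
      by move=> i' j' lt'; split; [apply: rowa|apply: rowb].
    by move=> j' lt'; split; [apply: IHj => //; exact: ltn_trans lt'|apply: colb; exact: ltn_trans lt'].
  have := TOP2 Pa (p := p) (q := j); rewrite /zr; apply.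
    by move=> i' j' lt'; split => //; apply: rowa.
  by move=> j' lt'; split => //; apply: IHj => //; exact: ltn_trans lt'.
have eqab : a p q = b p q.
  apply/eqP; rewrite eq_le; apply/andP; split.
    apply: (TOP2 Sab).
      by move=> i' j' lt'; split; [apply: rowa|apply: rowb].
    by move=> j' lt'; split; [apply: cola|apply: colb].
  apply: (TOP2 Sba).
    by move=> i' j' lt'; split; [apply: rowb|apply: rowa].
  by move=> j' lt'; split; [apply: colb|apply: cola].
split => //; split; first by rewrite eqab.
move=> i' j' nz.
case: (ltngtP i' p) => [lt|gt|e]; first by left.
  by rewrite rowa in nz.
right; split; first exact: val_inj.
rewrite leqNgt; apply/negP => lt.
have e' : i' = p by apply: val_inj.
by rewrite e' cola in nz.
Qed.

End Lex.

Lemma DEC_MUL (P1 P2 : {poly rat}) m1 m2 e1 e2 :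
  (size (P1 - m1 *: 'X^e1)%R <= e1)%N -> (size (P2 - m2 *: 'X^e2)%R <= e2)%N ->
  (size (P1 * P2 - (m1 * m2) *: 'X^(e1 + e2))%R <= e1 + e2)%N.
Proof.
move=> H1 H2.
have -> : P1 * P2 - (m1 * m2) *: 'X^(e1 + e2) =
   (m1 *: 'X^e1) * (P2 - m2 *: 'X^e2) + (P1 - m1 *: 'X^e1) * (m2 *: 'X^e2) +
   (P1 - m1 *: 'X^e1) * (P2 - m2 *: 'X^e2).
  rewrite -!mul_polyC polyCM exprD; ring.
set R1 := P1 - _ in H1 *; set R2 := P2 - _ in H2 *.
have sX1 : (size (m1 *: 'X^e1 : {poly rat}) <= e1.+1)%N.
  by apply: leq_trans (size_scale_leq _ _) _; rewrite size_polyXn.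
have sX2 : (size (m2 *: 'X^e2 : {poly rat}) <= e2.+1)%N.
  by apply: leq_trans (size_scale_leq _ _) _; rewrite size_polyXn.
apply: leq_trans (size_polyD _ _) _; rewrite geq_max; apply/andP; split.
  apply: leq_trans (size_polyD _ _) _; rewrite geq_max; apply/andP; split.
    apply: leq_trans (size_polyMleq _ _) _; move: (leq_add sX1 H2); lia.
  apply: leq_trans (size_polyMleq _ _) _; move: (leq_add H1 sX2); lia.
apply: leq_trans (size_polyMleq _ _) _; move: (leq_add H1 H2); lia.
Qed.

Section Anti.
Variable n : nat.
Implicit Types a b c e : 'I_n.+1 -> 'I_n.+1 -> int.
Local Notation I2 := ('I_n.+1 * 'I_n.+1)%type.

Definition SS a b N k := forall r s r' s', (N <= r)%N -> (N <= s)%N ->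
  (r + k <= r')%N -> (s + k <= s')%N -> Fc a r s <= Fc b r' s'.

Definition cc c (x : I2) : rat := (c x.1 x.2)%:~R / ((x.1`!)%:R * (x.2`!)%:R).

Definition raypoly (lam : nat) c : {poly rat} :=
  \sum_(x : I2) cc c x *: (binomP (1%:P * 'X) x.1 * binomP ((lam%:R)%:P * 'X) x.2).

Lemma raypoly_ev lam c (t : nat) : (raypoly lam c).[t%:R] = (Fc c t (lam * t))%:~R.
Proof.
rewrite /raypoly /Fc horner_sum rmorph_sum /=.
under [RHS]eq_bigr => i _ do rewrite rmorph_sum.
rewrite pair_bigA /=; apply: eq_bigr => x _.
rewrite hornerZ hornerM !binomP_horner mul1r -natrM !binomP_nat !rmorphM /= !natZ /cc.
by field; rewrite ?fact_neq0.
Qed.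

Lemma raypoly_coef lam c D : (forall i j, c i j != 0 -> (i + j <= D)%N) ->
  (size (raypoly lam c) <= D.+1)%N /\
  (raypoly lam c)`_D = \sum_(x : I2) cc c x * (1 ^+ x.1 * lam%:R ^+ x.2) * ((x.1 + x.2)%N == D)%:R.
Proof.
move=> Hc.
have HP : forall x : I2,
  (size (binomP (1%:P * 'X : {poly rat}) x.1 * binomP ((lam%:R)%:P * 'X) x.2 -
     (fun x : I2 => 1 ^+ x.1 * lam%:R ^+ x.2) x *: 'X^((fun x : I2 => (x.1 + x.2)%N) x))%R
   <= (fun x : I2 => (x.1 + x.2)%N) x)%N.
  by move=> x /=; apply: DEC_MUL; apply: binom_dec.
have He : forall x : I2, cc c x != 0 -> ((fun x : I2 => (x.1 + x.2)%N) x <= D)%N.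
  move=> x /=; rewrite /cc => nz; apply: Hc; apply: contraNneq nz => ->.
  by rewrite mul0r.
split; first exact: (GENsize HP He).
exact: (GEN HP He (leqnn D)).
Qed.

Definition Wp c D : {poly rat} := \sum_(x : I2) (cc c x * ((x.1 + x.2)%N == D)%:R) *: 'X^(x.2).

Lemma Wp_ev c D lam :
  (Wp c D).[lam%:R] = \sum_(x : I2) cc c x * (1 ^+ x.1 * lam%:R ^+ x.2) * ((x.1 + x.2)%N == D)%:R.
Proof.
rewrite /Wp horner_sum; apply: eq_bigr => x _.
by rewrite hornerZ hornerXn expr1n mul1r mulrAC.
Qed.

Lemma Wp_coef c D (i j : 'I_n.+1) : (i + j = D)%N -> (Wp c D)`_j = cc c (i, j).
Proof.
move=> ijD; rewrite /Wp coef_sum (bigD1 (i, j)) //= coefZ coefXn ijD !eqxx mulr1 mulr1.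
rewrite big1 ?addr0 // => x ne; rewrite coefZ coefXn.
case: eqP => [e|_]; last by rewrite mulr0 mul0r.
case: eqP => [e2|_]; last by rewrite mulr0.
case/eqP: ne; case: x e e2 => [x1 x2] /= e e2.
have e1 : x1 = i by apply: val_inj; rewrite /=; lia.
have e2' : x2 = j by apply: val_inj.
by rewrite e1 e2'.
Qed.

Lemma ANTI a b N k D : SS a b N k -> SS b a N k ->
  (forall i j, a i j != 0 -> (i + j <= D)%N) -> (forall i j, b i j != 0 -> (i + j <= D)%N) ->
  forall i j : 'I_n.+1, (i + j = D)%N -> a i j = b i j.
Proof.
move=> Sab Sba Ha Hb.
have key : forall c e, SS c e N k -> (forall i j, c i j != 0 -> (i + j <= D)%N) ->
   (forall i j, e i j != 0 -> (i + j <= D)%N) -> forall lam, (0 < lam)%N ->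
   (Wp c D).[lam%:R] <= (Wp e D).[lam%:R].
  move=> c e Sce Hc He lam lam0; rewrite !Wp_ev.
  have [s1 c1] := raypoly_coef lam Hc; have [s2 c2] := raypoly_coef lam He.
  rewrite -c1 -c2; apply: (Ucmp (N := N) (k := k)) => // t Nt.
  rewrite !raypoly_ev ler_int; apply: Sce => //.
    by apply: leq_trans Nt _; rewrite leq_pmull.
  by rewrite mulnDr leq_add2l leq_pmull.
have W0 : Wp a D - Wp b D = 0.
  apply/eqP; apply: contraT => nz.
  have := max_poly_roots nz (rs := [seq (x.+1)%:R | x <- iota 0 (size (Wp a D - Wp b D))]).
  rewrite size_map size_iota ltnn; apply.
    apply/allP => y /mapP [x _ ->]; apply/rootP; rewrite hornerD hornerN.
    suff -> : (Wp a D).[x.+1%:R] = (Wp b D).[x.+1%:R] by rewrite subrr.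
    by apply/eqP; rewrite eq_le !key.
  rewrite map_inj_uniq ?iota_uniq // => x y /eqP; rewrite eqr_nat => /eqP; by case.
move=> i j ijD.
have := congr1 (fun p : {poly rat} => p`_j) W0; rewrite /= coefB coef0 => /eqP.
rewrite subr_eq0 !(Wp_coef _ ijD) /cc /= => /eqP E.
apply: (intr_inj (R := rat)).
exact: (mulIf (invr_neq0 (mulf_neq0 (fact_neq0 i) (fact_neq0 j))) E).
Qed.

End Anti.

Section HMP.

Local Notation MP := {mpoly rat[2]}.
Local Notation i0 := (0%R : 'I_2).
Local Notation i1 := (1%R : 'I_2).

Lemma msizeMle (p q : MP) : (msize (p * q) <= (msize p + msize q).-1)%N.
Proof.
have [->|p0] := eqVneq p 0; first by rewrite mul0r msize0.
have [->|q0] := eqVneq q 0; first by rewrite mulr0 msize0.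
by rewrite msizeM.
Qed.

Lemma msizeXn (k : 'I_2) i : msize (('X_k : MP) ^+ i) = i.+1.
Proof. by rewrite mpolyXn msizeX mdegMn mdeg1 mul1n. Qed.

Lemma mdec (k : 'I_2) i : (msize (binomP ('X_k : MP) i - 'X_k ^+ i) <= i)%N.
Proof.
elim: i => [|i IH]; first by rewrite /binomP big_ord0 expr0 subrr msize0.
rewrite /binomP big_ord_recr /= -/(binomP _ i).
set B := binomP _ i.
have -> : B * ('X_k + (i.+1)%:R) - 'X_k ^+ i.+1 =
   (i.+1)%:R * 'X_k ^+ i + (B - 'X_k ^+ i) * ('X_k + (i.+1)%:R).
  rewrite exprS; ring.
apply: leq_trans (msizeD_le _ _) _; rewrite geq_max; apply/andP; split.
  by rewrite mulr_natl -scaler_nat; apply: leq_trans (msizeZ_le _ _) _; rewrite msizeXn.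
apply: leq_trans (msizeMle _ _) _.
have s2 : (msize ('X_k + (i.+1)%:R : MP) <= 2)%N.
  apply: leq_trans (msizeD_le _ _) _; rewrite geq_max msizeX mdeg1 leqnn /=.
  by rewrite -mpolyC_nat msizeC; case: (_ != 0).
by rewrite -subn1 leq_subLR; apply: leq_trans (leq_add IH s2) _; rewrite addn2 add1n.
Qed.

Lemma mprod (B0 B1 : MP) i j :
  (msize (B0 - 'X_i0 ^+ i) <= i)%N -> (msize (B1 - 'X_i1 ^+ j) <= j)%N ->
  (msize (B0 * B1 - 'X_i0 ^+ i * 'X_i1 ^+ j) <= i + j)%N.
Proof.
move=> H0 H1.
have -> : B0 * B1 - 'X_i0 ^+ i * 'X_i1 ^+ j =
   'X_i0 ^+ i * (B1 - 'X_i1 ^+ j) + (B0 - 'X_i0 ^+ i) * 'X_i1 ^+ j +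
   (B0 - 'X_i0 ^+ i) * (B1 - 'X_i1 ^+ j) by ring.
apply: leq_trans (msizeD_le _ _) _; rewrite geq_max; apply/andP; split.
  apply: leq_trans (msizeD_le _ _) _; rewrite geq_max; apply/andP; split.
    apply: leq_trans (msizeMle _ _) _; rewrite msizeXn; move: H1; lia.
  apply: leq_trans (msizeMle _ _) _; rewrite msizeXn; move: H0; lia.
apply: leq_trans (msizeMle _ _) _; move: (leq_add H0 H1); lia.
Qed.

Definition mon (i j : nat) : 'X_{1..2} := (U_(i0) *+ i + U_(i1) *+ j)%MM.

Lemma mdeg_mon i j : mdeg (mon i j) = (i + j)%N.
Proof. by rewrite /mon mdegD !mdegMn !mdeg1 !mul1n. Qed.

Lemma mon_X i j : ('X_i0 ^+ i * 'X_i1 ^+ j : MP) = 'X_[mon i j].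
Proof. by rewrite !mpolyXn -mpolyXD. Qed.

Lemma mnmMnE (m : 'X_{1..2}) k l : (m *+ k)%MM l = (m l * k)%N.
Proof.
exact: mulmnE.
Qed.

Lemma mon_inj i j i' j' : mon i j = mon i' j' -> i = i' /\ j = j'.
Proof.
move=> e; have e0 := congr1 (fun m : 'X_{1..2} => m i0) e.
have e1 := congr1 (fun m : 'X_{1..2} => m i1) e.
move: e0 e1; rewrite /mon /= !mnmDE !mnmMnE !mnm1E /=; lia.
Qed.

Lemma mcoeff_small (p : MP) m : (msize p <= mdeg m)%N -> p@_m = 0.
Proof. by move=> /msize_mdeg_ge; rewrite -mcoeff_eq0 => /eqP. Qed.

Lemma msize_le (p : MP) d : (forall m, (d <= mdeg m)%N -> p@_m = 0) -> (msize p <= d)%N.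
Proof.
move=> H; have [->|p0] := eqVneq p 0; first by rewrite msize0.
rewrite -mlead_deg // ltnNge; apply/negP => le.
by move: p0; rewrite -mleadc_eq0 H.
Qed.

Lemma msize_gt (p : MP) m : p@_m != 0 -> (mdeg m < msize p)%N.
Proof. by rewrite mcoeff_eq0 negbK; apply: msize_mdeg_lt. Qed.

Section TC.
Variable n : nat.
Implicit Types c : 'I_n.+1 -> 'I_n.+1 -> int.

Definition ccm c (i j : 'I_n.+1) : rat := (c i j)%:~R / ((i`!)%:R * (j`!)%:R).

Lemma TOPC c m : (forall i j, c i j != 0 -> (i + j <= mdeg m)%N) ->
  (weyl_charpoly c)@_m = \sum_i \sum_j ccm c i j * (mon i j == m)%:R.
Proof.
move=> Hc; rewrite /weyl_charpoly raddf_sum; apply: eq_bigr => i _.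
rewrite raddf_sum; apply: eq_bigr => j _; rewrite [LHS]/= mcoeffZ -/(ccm c i j).
have [z|nz] := eqVneq (c i j) 0; first by rewrite /ccm z !mul0r.
congr (_ * _).
set B := binomP _ i * binomP _ j.
have := mprod (mdec i0 i) (mdec i1 j); rewrite -/B mon_X => sR.
have -> : B = 'X_[mon i j] + (B - 'X_[mon i j]) by rewrite addrC subrK.
rewrite mcoeffD mcoeffX mcoeff_small ?addr0 //.
exact: leq_trans sR (Hc _ _ nz).
Qed.

End TC.

End HMP.

Section Fin.
Variable n : nat.
Implicit Types a b c : 'I_n.+1 -> 'I_n.+1 -> int.

Definition tr c : 'I_n.+1 -> 'I_n.+1 -> int := fun i j => c j i.

Lemma Fc_tr c r s : Fc (tr c) r s = Fc c s r.
Proof.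
rewrite /Fc exchange_big; apply: eq_bigr => i _; apply: eq_bigr => j _.
by rewrite /tr mulrAC.
Qed.

Lemma S_tr a b N k : S_ab a b N k -> S_ab (tr a) (tr b) N k.
Proof. by move=> H r s Nr Ns; rewrite (Fc_tr a) (Fc_tr b); apply: H. Qed.

Lemma revlex_tr c i j : is_revlexmax c i j <-> is_lexmax (tr c) j i.
Proof. by split => [[nz H]|[nz H]]; split => // x y; apply: H. Qed.

Lemma lex_ordmax c : c ord_max ord_max != 0 -> is_lexmax c ord_max ord_max.
Proof.
move=> nz; split => // i' j' _.
have [lt|ge] := ltnP i' ord_max; first by left.
right; split; last by rewrite -ltnS ltn_ord.
apply: val_inj => /=; apply/eqP; rewrite eqn_leq ge andbT -ltnS; exact: ltn_ord.
Qed.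

Definition bnd c D := forall i j : 'I_n.+1, c i j != 0 -> (i + j <= D)%N.

Lemma coef_big c D m : bnd c D -> (D < mdeg m)%N -> (weyl_charpoly c)@_m = 0.
Proof.
move=> Hc lt; rewrite TOPC; last by move=> i j nz; apply: ltnW; exact: leq_ltn_trans (Hc _ _ nz) lt.
apply: big1 => i _; apply: big1 => j _.
have [z|nz] := eqVneq (c i j) 0; first by rewrite /ccm z !mul0r.
case: eqP => [e|]; last by rewrite mulr0.
by move: lt; rewrite -e mdeg_mon ltnNge (Hc _ _ nz).
Qed.

Lemma coef_top c D (i0 j0 : 'I_n.+1) : bnd c D -> (i0 + j0 = D)%N ->
  (weyl_charpoly c)@_(mon i0 j0) = ccm c i0 j0.
Proof.
move=> Hc e; rewrite TOPC; last by move=> i j nz; rewrite mdeg_mon e; apply: Hc.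
rewrite (bigD1 i0) //= (bigD1 j0) //= eqxx mulr1 big1 ?addr0.
  rewrite big1 ?addr0 // => i ne; apply: big1 => j _.
  case: eqP => [/mon_inj [e1 _]|]; last by rewrite mulr0.
  by case/eqP: ne; apply: val_inj.
move=> j ne; case: eqP => [/mon_inj [_ e2]|]; last by rewrite mulr0.
by case/eqP: ne; apply: val_inj.
Qed.

Lemma msize_exact c D (i0 j0 : 'I_n.+1) : bnd c D -> (i0 + j0 = D)%N -> c i0 j0 != 0 ->
  msize (weyl_charpoly c) = D.+1.
Proof.
move=> Hc e nz; apply/eqP; rewrite eqn_leq; apply/andP; split.
  by apply: msize_le => m le; apply: (coef_big Hc).
rewrite -e -(mdeg_mon i0 j0); apply: msize_gt; rewrite (coef_top Hc e) /ccm.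
by rewrite mulf_neq0 ?invr_neq0 ?mulf_neq0 ?fact_neq0 ?intr_eq0.
Qed.

Lemma MS a b :
  (forall D, bnd a D -> bnd b D -> forall i j : 'I_n.+1, (i + j = D)%N -> a i j = b i j) ->
  msize (weyl_charpoly a) = msize (weyl_charpoly b) /\
  (forall m, (mdeg m).+1 = msize (weyl_charpoly a) ->
     (weyl_charpoly a)@_m = (weyl_charpoly b)@_m).
Proof.
move=> ANT.
suff : forall D, (forall i j : 'I_n.+1, a i j != 0 -> (i + j < D)%N) ->
                 (forall i j : 'I_n.+1, b i j != 0 -> (i + j < D)%N) ->
  msize (weyl_charpoly a) = msize (weyl_charpoly b) /\
  (forall m, (mdeg m).+1 = msize (weyl_charpoly a) ->
     (weyl_charpoly a)@_m = (weyl_charpoly b)@_m).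
  move=> HH; apply: (HH (n + n).+1) => i j _; rewrite ltnS;
    apply: leq_add; rewrite -ltnS; exact: ltn_ord.
elim=> [|D IH] Ha Hb.
  have E : weyl_charpoly a = weyl_charpoly b.
    rewrite /weyl_charpoly; apply: eq_bigr => i _; apply: eq_bigr => j _.
    have [za|/Ha //] := eqVneq (a i j) 0.
    have [zb|/Hb //] := eqVneq (b i j) 0.
    by rewrite za zb.
  by rewrite E.
have Ba : bnd a D by move=> i j /Ha.
have Bb : bnd b D by move=> i j /Hb.
have E := ANT D Ba Bb.
case: (boolP [exists i : 'I_n.+1, exists j : 'I_n.+1, ((i + j)%N == D) && (a i j != 0)]).
  move=> /existsP [i0 /existsP [j0 /andP [/eqP e nz]]].
  have nzb : b i0 j0 != 0 by rewrite -E.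
  rewrite (msize_exact Ba e nz) (msize_exact Bb e nzb); split => // m.
  move=> /eqP; rewrite eqSS => /eqP md.
  rewrite TOPC; last by move=> i j nz'; rewrite md; apply: Ba.
  rewrite TOPC; last by move=> i j nz'; rewrite md; apply: Bb.
  apply: eq_bigr => i _; apply: eq_bigr => j _.
  case: eqP => [em|]; last by rewrite !mulr0.
  by rewrite /ccm E // -md -em mdeg_mon.
rewrite negb_exists => /forallP Hn; apply: IH.
  move=> i j nz; have := Ha _ _ nz; rewrite ltnS leq_eqVlt => /orP [/eqP e|] //.
  by have := Hn i; rewrite negb_exists => /forallP /(_ j); rewrite e eqxx nz.
move=> i j nz; have := Hb _ _ nz; rewrite ltnS leq_eqVlt => /orP [/eqP e|] //.
by have := Hn i; rewrite negb_exists => /forallP /(_ j); rewrite e eqxx E ?nz.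
Qed.

End Fin.

Theorem theorem5p7 (K : fieldType) (n : nat) (M : lmodType K)
  (X D : 'I_n -> {linear M -> M})
  (a b : 'I_n.+1 -> 'I_n.+1 -> int) (g h : seq M) :
  [pchar K] =i pred0 ->
  weyl_rel X D ->
  generates X D g -> generates X D h ->
  is_char_coeffs X D g a -> is_char_coeffs X D h b ->
  msize (weyl_charpoly a) = msize (weyl_charpoly b) /\
  a ord_max ord_max = b ord_max ord_max /\
  (forall i j, is_lexmax a i j <-> is_lexmax b i j) /\
  (forall i j, is_revlexmax a i j <-> is_revlexmax b i j) /\
  (forall i j, is_lexmax a i j -> a i j = b i j) /\
  (forall i j, is_revlexmax a i j -> a i j = b i j) /\
  (forall m : 'X_{1..2}, (mdeg m).+1 = msize (weyl_charpoly a) ->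
      mcoeff m (weyl_charpoly a) = mcoeff m (weyl_charpoly b)).
Proof.
move=> _ HW Hg Hh Ca Cb.
have [N1 [k1 S1]] := sandwich HW Hh Ca Cb.
have [N2 [k2 S2]] := sandwich HW Hg Cb Ca.
have [Na Pa] := nonneg Ca.
have [Nb Pb] := nonneg Cb.
pose N := maxn (maxn N1 N2) (maxn Na Nb).
pose k := maxn k1 k2.
have SSab : SS a b N k.
  move=> r s r' s' Nr Ns rr ss; apply: S1.
  - by apply: leq_trans Nr; rewrite /N !leq_max leqnn.
  - by apply: leq_trans Ns; rewrite /N !leq_max leqnn.
  - by apply: leq_trans rr; rewrite leq_add2l leq_max leqnn.
  - by apply: leq_trans ss; rewrite leq_add2l leq_max leqnn.
have SSba : SS b a N k.
  move=> r s r' s' Nr Ns rr ss; apply: S2.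
  - by apply: leq_trans Nr; rewrite /N !leq_max leqnn ?orbT.
  - by apply: leq_trans Ns; rewrite /N !leq_max leqnn ?orbT.
  - by apply: leq_trans rr; rewrite leq_add2l leq_max leqnn ?orbT.
  - by apply: leq_trans ss; rewrite leq_add2l leq_max leqnn ?orbT.
have Sab : S_ab a b N k by move=> r s Nr Ns; apply: SSab.
have Sba : S_ab b a N k by move=> r s Nr Ns; apply: SSba.
have Za : S_ab (@zr n) a N 0.
  move=> r s Nr Ns; rewrite Fc_zr !addn0; apply: Pa.
  - by apply: leq_trans Nr; rewrite /N !leq_max leqnn ?orbT.
  - by apply: leq_trans Ns; rewrite /N !leq_max leqnn ?orbT.
have Zb : S_ab (@zr n) b N 0.
  move=> r s Nr Ns; rewrite Fc_zr !addn0; apply: Pb.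
  - by apply: leq_trans Nr; rewrite /N !leq_max leqnn ?orbT.
  - by apply: leq_trans Ns; rewrite /N !leq_max leqnn ?orbT.
have Lab := fun p q => @LEX n a b N k p q Sab Sba Za.
have Lba := fun p q => @LEX n b a N k p q Sba Sab Zb.
have Rab := fun p q => @LEX n (tr a) (tr b) N k p q (S_tr Sab) (S_tr Sba) (S_tr Za).
have Rba := fun p q => @LEX n (tr b) (tr a) N k p q (S_tr Sba) (S_tr Sab) (S_tr Zb).
have [Ms Mc] := MS (fun D Ba Bb => ANTI SSab SSba Ba Bb).
split => //; split.
  have [nz|za] := eqVneq (a ord_max ord_max) 0; last first.
    by have [_ ->] := Lba _ _ (lex_ordmax za).
  have [nzb|zb] := eqVneq (b ord_max ord_max) 0; last by have [_ ->] := Lab _ _ (lex_ordmax zb).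
  by rewrite nz nzb.
split; first by move=> i j; split => [/Lba []|/Lab []].
split.
  move=> i j; split => HH.
    have [L _] := Rba _ _ (proj1 (revlex_tr a i j) HH); exact: (proj2 (revlex_tr b i j) L).
  have [L _] := Rab _ _ (proj1 (revlex_tr b i j) HH); exact: (proj2 (revlex_tr a i j) L).
split; first by move=> i j /Lba [_ ->].
split; last by [].
move=> i j HH; have [_ e] := Rba _ _ (proj1 (revlex_tr a i j) HH).
by move: e; rewrite /tr => ->.
Qed.
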